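(* For every integer $n \geq 1$, we have $\gamma_{\mathrm{aff}}(B_n) = n+1$, where $B_n$ is the closed unit ball of the Euclidean space $\mathbf{R}^n$.
   Context: For a convex body $K \subset \mathbf{R}^n$, an affine map $\Phi : \mathbf{R}^n \to \mathbf{R}^n$ is $K$-positive if $\Phi(K) \subset K$, strictly $K$-positive if $\Phi(K) \subset \mathrm{int}(K)$, and $K$-primitive if it is $K$-positive and there is an integer $k \geq 1$ with $\Phi^k$ strictly $K$-positive; the smallest such $k$ is $\gamma_{\mathrm{aff}}(K,\Phi)$. The affine maximal exponent $\gamma_{\mathrm{aff}}(K)$ is the supremum of $\gamma_{\mathrm{aff}}(K,\Phi)$ over all $K$-primitive affine maps $\Phi : \mathbf{R}^n \to \mathbf{R}^n$. *)

(* Defs.v *)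
From HB Require Import structures.
From mathcomp Require Import all_boot all_order all_algebra.
From mathcomp Require Import all_classical all_reals ereal.
Set Implicit Arguments. Unset Strict Implicit. Unset Printing Implicit Defensive.
Import Order.TTheory GRing.Theory Num.Theory.
Local Open Scope ring_scope.
Local Open Scope classical_set_scope.

Definition sqnorm (R : realType) (n : nat) (x : 'cV[R]_n) : R :=
  \sum_(i < n) (x i 0) ^+ 2.

Arguments sqnorm {R n} x.
Definition unit_ball (R : realType) (n : nat) : set 'cV[R]_n :=
  [set x | sqnorm x <= 1].

Definition interior_set (R : realType) (n : nat) (K : set 'cV[R]_n) : set 'cV[R]_n :=
  [set x | exists2 e : R, 0 < e &
     forall y : 'cV[R]_n, sqnorm (y - x) < e ^+ 2 -> K y].

Definition is_affine (R : realType) (n : nat) (f : 'cV[R]_n -> 'cV[R]_n) : Prop :=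
  exists (A : 'M[R]_n) (b : 'cV[R]_n), forall x, f x = A *m x + b.

Definition K_positive (R : realType) (n : nat) (K : set 'cV[R]_n)
  (f : 'cV[R]_n -> 'cV[R]_n) : Prop := f @` K `<=` K.

Definition strictly_K_positive (R : realType) (n : nat) (K : set 'cV[R]_n)
  (f : 'cV[R]_n -> 'cV[R]_n) : Prop := f @` K `<=` interior_set K.

Definition K_primitive (R : realType) (n : nat) (K : set 'cV[R]_n)
  (f : 'cV[R]_n -> 'cV[R]_n) : Prop :=
  K_positive K f /\ exists k : nat, (1 <= k)%N /\ strictly_K_positive K (iter k f).

Definition is_gamma_aff_map (R : realType) (n : nat) (K : set 'cV[R]_n)
  (f : 'cV[R]_n -> 'cV[R]_n) (k : nat) : Prop :=
  [/\ (1 <= k)%N, strictly_K_positive K (iter k f) &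
      forall j : nat, (1 <= j)%N -> (j < k)%N -> ~ strictly_K_positive K (iter j f)].

Definition gamma_aff (R : realType) (n : nat) (K : set 'cV[R]_n) : \bar R :=
  ereal_sup [set ((k%:R : R)%:E) | k in
    [set k : nat | exists f, [/\ is_affine f, K_primitive K f & is_gamma_aff_map K f k]]].
Arguments unit_ball R n : clear implicits.

(* Main.v *)
Require Import Defs.
From HB Require Import structures.
From mathcomp Require Import all_boot all_order all_algebra.
From mathcomp Require Import all_classical all_reals ereal.
From mathcomp Require Import zify ring lra.
Import Order.TTheory GRing.Theory Num.Theory.
Local Open Scope ring_scope.

Section Basics.
Variable R : realType.
Variable n : nat.
Implicit Types (u v w x y z : 'cV[R]_n).

Definition dot u v : R := \sum_(i < n) u i 0 * v i 0.

Lemma sqnormE x : sqnorm x = dot x x.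
Proof. by apply: eq_bigr => i _; rewrite expr2. Qed.

Lemma dotC u v : dot u v = dot v u.
Proof. by apply: eq_bigr => i _; rewrite mulrC. Qed.

Lemma dotDr u v w : dot u (v + w) = dot u v + dot u w.
Proof. rewrite /dot -big_split; apply: eq_bigr => i _; by rewrite !mxE mulrDr. Qed.

Lemma dotDl u v w : dot (v + w) u = dot v u + dot w u.
Proof. by rewrite dotC dotDr !(dotC u). Qed.

Lemma dotZr a u v : dot u (a *: v) = a * dot u v.
Proof. rewrite /dot mulr_sumr; apply: eq_bigr => i _; rewrite !mxE; ring. Qed.

Lemma dotZl a u v : dot (a *: v) u = a * dot v u.
Proof. by rewrite dotC dotZr dotC. Qed.

Lemma dotNr u v : dot u (- v) = - dot u v.
Proof. by rewrite -scaleN1r dotZr mulN1r. Qed.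

Lemma dotNl u v : dot (- v) u = - dot v u.
Proof. by rewrite dotC dotNr dotC. Qed.

Lemma dotBr u v w : dot u (v - w) = dot u v - dot u w.
Proof. by rewrite dotDr dotNr. Qed.

Lemma dotBl u v w : dot (v - w) u = dot v u - dot w u.
Proof. by rewrite dotDl dotNl. Qed.

Lemma dot0r u : dot u 0 = 0.
Proof. by rewrite /dot big1 // => i _; rewrite mxE mulr0. Qed.

Lemma sqnorm_ge0 x : 0 <= sqnorm x.
Proof. by apply: sumr_ge0 => i _; rewrite sqr_ge0. Qed.

Lemma sqnorm_eq0 x : sqnorm x = 0 -> x = 0.
Proof.
move=> h; apply/matrixP => i j; rewrite (ord1 j) mxE.
have := @psumr_eq0P _ _ predT (fun i => x i 0 ^+ 2) (fun k _ => sqr_ge0 _) h i isT.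
by move/eqP; rewrite sqrf_eq0 => /eqP ->.
Qed.

Lemma sqnormD u v : sqnorm (u + v) = sqnorm u + 2 * dot u v + sqnorm v.
Proof. rewrite !sqnormE dotDl !dotDr (dotC v u); ring. Qed.

Lemma sqnormB u v : sqnorm (u - v) = sqnorm u - 2 * dot u v + sqnorm v.
Proof. rewrite !sqnormE dotBl !dotBr (dotC v u); ring. Qed.

Lemma sqnormZ a u : sqnorm (a *: u) = a ^+ 2 * sqnorm u.
Proof. rewrite !sqnormE dotZl dotZr; ring. Qed.

Lemma dot_le u v : 2 * dot u v <= sqnorm u + sqnorm v.
Proof.
have := sqnorm_ge0 (u - v); rewrite sqnormB; lra.
Qed.

Lemma dot_le_eps e u v : 0 < e -> 2 * dot u v <= e * sqnorm u + e^-1 * sqnorm v.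
Proof.
move=> he; have := dot_le (e *: u) v; rewrite dotZl sqnormZ => h.
have he' : e^-1 * e = 1 by rewrite mulVf // gt_eqF.
have : e^-1 * (2 * (e * dot u v)) <= e^-1 * (e ^+ 2 * sqnorm u + sqnorm v).
  by rewrite ler_pM2l ?invr_gt0.
have -> : e^-1 * (2 * (e * dot u v)) = 2 * dot u v * (e^-1 * e) by ring.
have -> : e^-1 * (e ^+ 2 * sqnorm u + sqnorm v) = e * sqnorm u * (e^-1 * e) + e^-1 * sqnorm v by ring.
by rewrite he' !mulr1.
Qed.

Lemma parallelogram u v : sqnorm (u + v) + sqnorm (u - v) = 2 * sqnorm u + 2 * sqnorm v.
Proof. rewrite sqnormD sqnormB; ring. Qed.

Lemma in_int {z} : sqnorm z < 1 -> interior_set (unit_ball R n) z.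
Proof.
move=> hz; set s := sqnorm z in hz *.
have s0 : 0 <= s := sqnorm_ge0 z.
set t := 1 - s.
have t0 : 0 < t by rewrite /t; lra.
exists (t / 3); first by rewrite divr_gt0.
move=> y hy; rewrite /unit_ball /=.
have -> : y = z + (y - z) by rewrite addrC subrK.
set w := y - z in hy *.
rewrite sqnormD.
have hW := sqnorm_ge0 w.
have := @dot_le_eps (t / 2) z w ltac:(by rewrite divr_gt0).
rewrite -/s => hd.
have hWt : sqnorm w * 9 < t ^+ 2.
  by move: hy; rewrite expr_div_n ltr_pdivlMr //; lra.
have hinv : (t / 2)^-1 * sqnorm w <= 2 * t / 9.
  rewrite invf_div mulrAC ler_pdivrMr //; nra.
have ht : t = 1 - s by [].
clearbody t s; subst t; nra.
Qed.

Lemma not_int z : sqnorm z = 1 -> ~ interior_set (unit_ball R n) z.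
Proof.
move=> hz [e he hb].
have := hb ((1 + e / 2) *: z).
have -> : (1 + e / 2) *: z - z = (e / 2) *: z by rewrite scalerDl scale1r addrAC subrr add0r.
rewrite sqnormZ hz mulr1 /unit_ball /= sqnormZ hz mulr1.
move=> h.
have h1 : (e / 2) ^+ 2 < e ^+ 2 by nra.
have := h h1; nra.
Qed.

Lemma sqnormN u : sqnorm (- u) = sqnorm u.
Proof. by rewrite -scaleN1r sqnormZ sqrrN expr1n mul1r. Qed.

Lemma dot_mulmx (M : 'M[R]_n) y z : dot y (M *m z) = dot (M^T *m y) z.
Proof.
rewrite /dot. under eq_bigr => i _ do rewrite mxE mulr_sumr.
under [RHS]eq_bigr => j _ do rewrite mxE mulr_suml.
rewrite exchange_big /=; apply: eq_bigr => j _; apply: eq_bigr => i _; rewrite mxE; ring.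
Qed.

Lemma dot_suml N (w : 'I_N -> R) (u : 'I_N -> 'cV[R]_n) v :
  dot (\sum_i w i *: u i) v = \sum_i w i * dot (u i) v.
Proof.
rewrite /dot; under eq_bigr => k _ do rewrite summxE mulr_suml.
rewrite exchange_big; apply: eq_bigr => i _; rewrite mulr_sumr; apply: eq_bigr => k _; rewrite mxE; ring.
Qed.

Section Aff.
Variables (M : 'M[R]_n) (d : 'cV[R]_n).
Hypothesis hpos : forall z, sqnorm z <= 1 -> sqnorm (M *m z + d) <= 1.

Lemma const_of_interior x : sqnorm x < 1 -> sqnorm (M *m x + d) = 1 ->
  forall w, M *m w = 0.
Proof.
move=> hx hy w; have [e he hb] := in_int hx.
have W0 := sqnorm_ge0 w.
set W := sqnorm w in W0.
set eps := e / (1 + W).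
have hW1 : 0 < 1 + W by lra.
have eps0 : 0 < eps by rewrite divr_gt0.
have heps : eps * (1 + W) = e by rewrite /eps mulfVK // gt_eqF.
have hsmall : sqnorm (eps *: w) < e ^+ 2.
  rewrite sqnormZ -/W -heps; nra.
have h1 := hpos _ (hb (x + eps *: w) ltac:(by rewrite addrAC subrr add0r)).
have h2 := hpos _ (hb (x - eps *: w) ltac:(by rewrite addrAC subrr add0r sqnormN)).
rewrite mulmxDr addrAC in h1.
rewrite mulmxBr addrAC in h2.
have := parallelogram (M *m x + d) (M *m (eps *: w)).
rewrite hy => hp.
have hz : sqnorm (M *m (eps *: w)) = 0.
  by apply/eqP; rewrite eq_le sqnorm_ge0 andbT; lra.
move/sqnorm_eq0: hz; rewrite -scalemxAr => /eqP; rewrite scaler_eq0 (gt_eqF eps0) /=.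
by move/eqP.
Qed.

Lemma contact_id {x} : sqnorm x = 1 -> sqnorm (M *m x + d) = 1 ->
  forall z s, dot (M *m x + d) (M *m z + s *: d) - s
              = dot (M *m x + d) (M *m x) * (dot x z - s).
Proof.
move=> hx hy z s.
set y := M *m x + d.
set g := M^T *m y.
set l := dot y (M *m x).
have hl : dot g x = l by rewrite /l dot_mulmx.
have hyd : dot y d = 1 - l.
  have h : dot y (M *m x + d) = 1 by rewrite -hy sqnormE.
  move: h; rewrite dotDr -/l; lra.
have hle : forall z, sqnorm z <= 1 -> dot g z <= l.
  move=> z' hz; have := dot_le y (M *m z' + d); have := hpos _ hz.
  rewrite dotDr hyd -dot_mulmx hy; lra.
have hG : sqnorm g <= l ^+ 2.
  rewrite leNgt; apply/negP => hlt.
  have G0 : 0 < sqnorm g by have := sqr_ge0 l; lra.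
  set G := sqnorm g in hlt G0.
  case: (lerP l 0) => hl0.
    set t := (G + 1)^-1.
    have ht : t * (G + 1) = 1 by rewrite /t mulVf // gt_eqF //; lra.
    have t0 : 0 < t by rewrite /t invr_gt0; lra.
    have := hle (t *: g); rewrite sqnormZ dotZr -sqnormE -/G => h.
    have : t ^+ 2 * G <= 1 by nra.
    move/h; nra.
  set t := 2 * l / (G + l ^+ 2).
  have hP : 0 < G + l ^+ 2 by have := sqr_ge0 l; lra.
  have ht : t * (G + l ^+ 2) = 2 * l by rewrite /t mulfVK // gt_eqF.
  have t0 : 0 < t by rewrite /t divr_gt0 //; lra.
  have := hle (t *: g); rewrite sqnormZ dotZr -sqnormE -/G => h.
  have h1 : t ^+ 2 * G * (G + l ^+ 2) ^+ 2 <= 1 * (G + l ^+ 2) ^+ 2.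
    have -> : t ^+ 2 * G * (G + l ^+ 2) ^+ 2 = (t * (G + l ^+ 2)) ^+ 2 * G by ring.
    rewrite ht; nra.
  rewrite ler_pM2r ?exprn_gt0 // in h1.
  have := h h1; nra.
have hg : g = l *: x.
  apply/eqP; rewrite -subr_eq0; apply/eqP/sqnorm_eq0.
  apply/eqP; rewrite eq_le sqnorm_ge0 andbT sqnormB sqnormZ hx dotZr hl; nra.
rewrite dotDr dotZr hyd dot_mulmx -/g hg dotZl; ring.
Qed.

Lemma lam_eq {x x'} : sqnorm x = 1 -> sqnorm (M *m x + d) = 1 ->
  sqnorm x' = 1 -> sqnorm (M *m x' + d) = 1 ->
  dot (M *m x + d) (M *m x) = dot (M *m x' + d) (M *m x').
Proof.
move=> h1 h2 h3 h4.
have e1 := contact_id h1 h2 x' 1; have e2 := contact_id h3 h4 x 1.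
rewrite scale1r in e1 e2.
case: (eqVneq (dot x x') 1) => hd.
  have : sqnorm (x - x') = 0 by rewrite sqnormB h1 h3 hd; ring.
  by move/sqnorm_eq0/eqP; rewrite subr_eq0 => /eqP ->.
rewrite (dotC (M *m x' + d)) (dotC x') in e2.
have : (dot (M *m x + d) (M *m x) - dot (M *m x' + d) (M *m x')) * (dot x x' - 1) = 0.
  by rewrite mulrBl -e1 -e2 subrr.
have hd' : dot x x' - 1 != 0 by rewrite subr_eq0.
move/eqP; rewrite mulf_eq0 (negbTE hd') orbF subr_eq0.
by move/eqP.
Qed.

Lemma span_closed N (w : 'I_N -> R) (p : 'I_N -> 'cV[R]_n) y :
  (forall i, w i != 0 -> sqnorm (p i) = 1 /\ sqnorm (M *m p i + d) = 1) ->
  \sum_i w i = 1 -> y = \sum_i w i *: p i -> sqnorm y = 1 ->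
  sqnorm (M *m y + d) = 1.
Proof.
move=> hc hw hy hy1.
case: (pickP (fun i => w i != 0)) => [i0 /= hi0 | hn]; last first.
  have : \sum_i w i = 0 by apply: big1 => i _; move: (hn i) => /= /negbFE /eqP.
  by rewrite hw => /eqP; rewrite oner_eq0.
have [c1 c2] := hc i0 hi0.
set l := dot (M *m p i0 + d) (M *m p i0).
have key : forall i, w i * (dot (M *m p i + d) (M *m y + d) - 1)
                     = w i * (l * (dot (p i) y - 1)).
  move=> i; case: (eqVneq (w i) 0) => [->|hi]; first by rewrite !mul0r.
  have [d1 d2] := hc i hi.
  have := contact_id d1 d2 y 1; rewrite scale1r => ->.
  by rewrite (lam_eq d1 d2 c1 c2).
have hsum : \sum_i (w i * dot (M *m p i + d) (M *m y + d) - w i)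
            = \sum_i (l * (w i * dot (p i) y) - l * w i).
  by apply: eq_bigr => i _; move: (key i); rewrite mulrBr mulr1 => ->; ring.
move: hsum.
rewrite !sumrB -!mulr_sumr hw -!dot_suml -hy -sqnormE hy1.
have -> : \sum_i w i *: (M *m p i + d) = M *m y + d.
  rewrite hy mulmx_sumr.
  under eq_bigr => i _ do rewrite scalerDr scalemxAr.
  by rewrite big_split /= -scaler_suml hw scale1r.
rewrite -sqnormE; lra.
Qed.

End Aff.
End Basics.
Arguments const_of_interior {R n M d} hpos {x}.
Arguments span_closed {R n M d} hpos {N} w p y.
Arguments sqnorm_eq0 {R n x}.
Arguments in_int {R n z}.
Section Upper.
Variable R : realType.
Variable n : nat.
Variable f : 'cV[R]_n -> 'cV[R]_n.
Hypothesis haff : is_affine f.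
Hypothesis hpos : forall x, sqnorm x <= 1 -> sqnorm (f x) <= 1.
Variable k0 : nat.
Hypothesis hk0 : forall x, sqnorm x <= 1 -> sqnorm (iter k0 f x) < 1.

Lemma iter_aff j : exists (M : 'M[R]_n) (d : 'cV[R]_n), forall x, iter j f x = M *m x + d.
Proof.
have [A [b hf]] := haff.
elim: j => [|j [M [d hd]]].
  by exists 1%:M, 0 => x /=; rewrite mul1mx addr0.
exists (A *m M), (A *m d + b) => x.
by rewrite iterS hd hf mulmxDr mulmxA addrA.
Qed.

Lemma pos_iter j x : sqnorm x <= 1 -> sqnorm (iter j f x) <= 1.
Proof. by move=> hx; elim: j => [|j IH] //=; apply: hpos. Qed.

Definition G j x := forall i, (i <= j)%N -> sqnorm (iter i f x) = 1.

Lemma G_mono j j' x : (j' <= j)%N -> G j x -> G j' x.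
Proof. by move=> hj hG i hi; apply: hG; apply: leq_trans hj. Qed.

Lemma noG j x : (k0 <= j)%N -> G j x -> False.
Proof.
move=> hj hG; have h0 := hG 0%N isT; have h1 := hG k0 hj.
have := hk0 x; rewrite h0 lexx => /(_ isT); by rewrite h1 ltxx.
Qed.

Lemma stab j : (forall x, G j x -> G j.+1 x) -> forall m x, G j x -> G (j + m) x.
Proof.
move=> hs m; elim: m => [|m IH] x hx; first by rewrite addn0.
have h1 := hs x hx.
have hfx : G j (f x) by move=> i hi; rewrite -iterSr; apply: h1.
have h2 := IH _ hfx.
move=> [|i] hi; first by apply: hx.
by rewrite iterSr; apply: h2; rewrite addnS ltnS in hi.
Qed.

Variable x0 : 'cV[R]_n.
Hypothesis hx0 : sqnorm x0 <= 1.
Hypothesis h1 : sqnorm (iter n.+1 f x0) = 1.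

Lemma G_x0 : G n.+1 x0.
Proof.
move=> i hi.
have hp := pos_iter i x0 hx0.
case: (ltngtP i n.+1) => [hlt|hgt|->//]; last by rewrite ltnNge hi in hgt.
set m := (n.+1 - i)%N.
have [M [d hd]] := iter_aff m.
have hposM : forall z, sqnorm z <= 1 -> sqnorm (M *m z + d) <= 1.
  by move=> z hz; rewrite -hd; apply: pos_iter.
have hmi : iter m f (iter i f x0) = iter n.+1 f x0.
  by rewrite -iterD /m subnK // ltnW.
rewrite le_eqVlt in hp; case/orP: hp => [/eqP //|hp].
exfalso.
have hc := const_of_interior hposM hp.
rewrite hd in hmi; rewrite hmi in hc.
have hcst : forall z, iter m f z = d.
  by move=> z; rewrite hd (hc h1 z) add0r.
have hd1 : sqnorm d = 1.
  by rewrite -h1 -hmi (hc h1) add0r.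
have e1 : iter (m + k0) f 0 = d by rewrite iterD hcst.
have e2 : sqnorm (iter (k0 + m) f 0) < 1.
  rewrite iterD; apply: hk0; apply: pos_iter.
  by rewrite /sqnorm big1 ?ler01 // => k _; rewrite mxE expr0n.
by move: e2; rewrite addnC e1 hd1 ltxx.
Qed.

Lemma split_min_s N (c : 'I_N -> R) (j0 : 'I_N) :
  (forall j : 'I_N, (j < j0)%N -> c j = 0) ->
  \sum_(j < N) c j = c j0 + \sum_(j < N) (if (j0 < j)%N then c j else 0).
Proof.
move=> hmin; rewrite (bigD1 j0) //=; congr (_ + _).
rewrite [RHS](bigD1 j0) //= ltnn add0r; apply: eq_bigr => j hj.
case: (ltngtP j0 j) => h //; first by rewrite hmin.
by move/val_inj: h => h; rewrite h eqxx in hj.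
Qed.

Lemma split_min_v N (c : 'I_N -> R) (X : 'I_N -> 'cV[R]_n) (j0 : 'I_N) :
  (forall j : 'I_N, (j < j0)%N -> c j = 0) ->
  \sum_(j < N) c j *: X j = c j0 *: X j0 + \sum_(j < N) (if (j0 < j)%N then c j else 0) *: X j.
Proof.
move=> hmin; rewrite (bigD1 j0) //=; congr (_ + _).
rewrite [RHS](bigD1 j0) //= ltnn scale0r add0r; apply: eq_bigr => j hj.
case: (ltngtP j0 j) => h //; first by rewrite hmin // !scale0r.
by move/val_inj: h => h; rewrite h eqxx in hj.
Qed.

Lemma upper_contra : False.
Proof.
have hG0 := G_x0.
case: (boolp.pselect (exists j, (j <= n)%N /\ forall x, G j x -> G j.+1 x)) => [[j [hj hs]]|hns].
  have := @stab j hs k0 x0 (@G_mono n.+1 j x0 (leqW hj) hG0).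
  by apply: noG; apply: leq_addl.
have hX : forall j : 'I_n.+2, exists x, G j x /\ ((j <= n)%N -> ~ G j.+1 x).
  move=> j; case: (leqP j n) => hj.
    case: (boolp.pselect (exists x, G j x /\ ~ G j.+1 x)) => [[x hx]|hno].
      by exists x; split; [exact: hx.1 | move=> _; exact: hx.2].
    exfalso; apply: hns; exists j; split => // x hx.
    apply: boolp.contrapT => hn'; apply: hno; by exists x.
  exists x0; split; last by [].
  by apply: (@G_mono n.+1 j x0 _ hG0); rewrite -ltnS.
have [X hXp] := boolp.choice hX.
set L := \matrix_(j < n.+2, k < n) X j k 0.
set V := row_mx L (const_mx 1 : 'M[R]_(n.+2, 1)).
set K := kermx V.
have hK : K != 0.
  rewrite -mxrank_eq0 mxrank_ker subn_eq0 -ltnNge.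
  by apply: leq_ltn_trans (rank_leq_col V) _; rewrite addn1.
have [i hi] : exists i, row i K != 0.
  case: (pickP (fun i => row i K != 0)) => [i hi|hn]; first by exists i.
  exfalso; move/eqP: hK; apply; apply/matrixP => a b.
  by have := hn a; move=> /= /negbFE /eqP /matrixP /(_ 0 b); rewrite !mxE.
set c := row i K.
have hc : c *m V = 0 by rewrite /c -row_mul mulmx_ker row0.
have [j1 hj1] : exists j, c 0 j != 0.
  case: (pickP (fun j => c 0 j != 0)) => [j hj|hn]; first by exists j.
  exfalso; move/eqP: hi; apply; apply/matrixP => a b.
  have := hn b; move=> /= /negbFE /eqP hb; by rewrite (ord1 a) [RHS]mxE.
case: (@arg_minnP _ j1 (fun j => c 0 j != 0) (fun j : 'I_n.+2 => val j) hj1) => j0 hc0 hmin.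
have hmin' : forall j : 'I_n.+2, (j < j0)%N -> c 0 j = 0.
  move=> j hj; apply/eqP; apply: contraTT hj => hj; by rewrite -leqNgt; apply: hmin.
rewrite /V mul_mx_row in hc; move/eqP: hc; rewrite row_mx_eq0 => /andP[/eqP hL /eqP h1c].
have hsumc : \sum_j c 0 j = 0.
  have := congr1 (fun A : 'M[R]_(1,1) => A 0 0) h1c; rewrite !mxE => h.
  by apply: (etrans _ h); apply: eq_bigr => j _; rewrite ?mxE ?mulr1.
have hsumX : \sum_j c 0 j *: X j = 0.
  apply/matrixP => k b; rewrite (ord1 b) summxE mxE.
  have := congr1 (fun A : 'M[R]_(1,n) => A 0 k) hL; rewrite !mxE => h.
  by apply: (etrans _ h); apply: eq_bigr => j _; rewrite !mxE.
set w := fun j : 'I_n.+2 => - (c 0 j0)^-1 * (if (j0 < j)%N then c 0 j else 0).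
have hw : \sum_j w j = 1.
  rewrite /w -mulr_sumr.
  have := @split_min_s _ (fun j => c 0 j) j0 hmin'; rewrite hsumc => h.
  have -> : \sum_(j < n.+2) (if (j0 < j)%N then c 0 j else 0) = - c 0 j0 by apply: (addrI (c 0 j0)); rewrite -h subrr.
  by rewrite mulrNN mulVf.
have hwX : X j0 = \sum_j w j *: X j.
  rewrite /w.
  under eq_bigr => j _ do rewrite -scalerA.
  rewrite -scaler_sumr.
  have := @split_min_v _ (fun j => c 0 j) X j0 hmin'; rewrite hsumX => h.
  have -> : \sum_(j < n.+2) (if (j0 < j)%N then c 0 j else 0) *: X j = - (c 0 j0 *: X j0).
    by apply: (addrI (c 0 j0 *: X j0)); rewrite -h subrr.
  by rewrite scaleNr scalerN opprK scalerA mulVf // scale1r.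
have hj0 : G j0.+1 (X j0).
  move=> i' hi'.
  have [M [d hd]] := iter_aff i'.
  have hposM : forall z, sqnorm z <= 1 -> sqnorm (M *m z + d) <= 1.
    by move=> z hz; rewrite -hd; apply: pos_iter.
  rewrite hd; apply: (span_closed hposM w X (X j0)) => //.
  - move=> j hwj.
    have hlt : (j0 < j)%N.
      by apply: contraNT hwj; rewrite /w => /negbTE ->; rewrite mulr0.
    have hGj := (hXp j).1.
    split; first by apply: (hGj 0%N).
    by rewrite -hd; apply: hGj; apply: leq_trans hi' hlt.
  - exact: ((hXp j0).1 0%N).
have hj0n : (j0 <= n)%N.
  rewrite leqNgt; apply/negP => hgt.
  have : \sum_j w j = 0.
    apply: big1 => j _; rewrite /w ifF ?mulr0 //; apply/negbTE; rewrite -leqNgt.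
    by have := ltn_ord j; rewrite ltnS => /leq_trans; apply.
  by rewrite hw => /eqP; rewrite oner_eq0.
exact: ((hXp j0).2 hj0n hj0).
Qed.

End Upper.

Section Example.
Variable R : realType.
Variable m : nat.

Definition rr : R := 2^-1.
Definition qq : R := rr ^+ (2 * m.+1).
Definition aa : R := - rr ^+ m.+2.
Definition bb : R := Num.sqrt ((1 - rr ^+ 2) * (1 - qq)).

Definition AA : 'M[R]_m.+1 := \matrix_(i, j)
  (if i == ord0 then (if j == ord_max then aa else 0)
   else (if (j : nat) == i.-1 then rr else 0)).
Definition cc : 'cV[R]_m.+1 := \col_i (if i == ord0 then bb else 0).
Definition Phi (x : 'cV[R]_m.+1) : 'cV[R]_m.+1 := AA *m x + cc.

Lemma Phi_coord x i : Phi x i 0 =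
  if i == ord0 then aa * x ord_max 0 + bb else rr * x (inord i.-1) 0.
Proof.
rewrite /Phi /cc !mxE; case: eqP => hi.
  subst i; under eq_bigr => j _ do rewrite /AA mxE eqxx.
  rewrite (bigD1 ord_max) //= eqxx big1 ?addr0 // => j hj.
  by rewrite (negbTE hj) mul0r.
under eq_bigr => j _ do rewrite /AA mxE (introF eqP hi).
have hi' : (i.-1 < m.+1)%N by apply: leq_ltn_trans (leq_pred i) (ltn_ord i).
rewrite (bigD1 (inord i.-1)) //= inordK // eqxx big1 ?addr0 // => j hj.
case: eqP => hj' //; last by rewrite mul0r.
by exfalso; move/eqP: hj; apply; apply/val_inj; rewrite /= inordK.
Qed.

Lemma iter_coord k x (i : 'I_m.+1) : (k <= m.+1)%N ->
  iter k Phi x i 0 = if (k <= i)%N then rr ^+ k * x (inord (i - k)) 0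
                     else aa * rr ^+ k.-1 * x (inord (i + m.+1 - k)) 0 + bb * rr ^+ i.
Proof.
elim: k i => [|k IH] i hk.
  by rewrite /= expr0 mul1r subn0 inord_val.
rewrite iterS Phi_coord; case: eqP => [->|hi].
  rewrite IH; last by rewrite -ltnS ltnW.
  have hkm : (k <= m)%N by rewrite -ltnS.
  rewrite /= hkm /= expr0 mulr1 mulrA.
  congr (_ * x _ 0 + _); apply: val_inj; rewrite /= !inordK //; try lia.
have hi0 : (0 < i)%N by rewrite lt0n; apply/eqP => h; apply: hi; apply: val_inj.
have hi' : (i.-1 < m.+1)%N by apply: leq_ltn_trans (leq_pred i) (ltn_ord i).
rewrite IH ?inordK //; last by apply: ltnW.
case: (leqP k i.-1) => hki.
  have -> : (k < i)%N by lia.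
  rewrite exprS mulrA; congr (_ * x _ 0); apply: val_inj; rewrite /= !inordK //; lia.
have -> : (k < i)%N = false by apply/negbTE; lia.
have hk0 : (0 < k)%N by lia.
have e1 : rr ^+ k.+1.-1 = rr * rr ^+ k.-1 by rewrite -exprS prednK.
have e2 : rr ^+ i = rr * rr ^+ i.-1 by rewrite -exprS prednK.
have e3 : (i.-1 + m.+1 - k = i + m.+1 - k.+1)%N by lia.
rewrite e1 e2 e3; ring.
Qed.

End Example.
Section Example2.
Variable R : realType.
Variable m : nat.
Local Notation rr := (@rr R).
Local Notation qq := (@qq R m).
Local Notation aa := (@aa R m).
Local Notation bb := (@bb R m).
Local Notation Phi := (@Phi R m).

Lemma rr2 : rr ^+ 2 = 4^-1.
Proof. by rewrite /rr exprVn -natrX. Qed.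

Lemma rr_gt0 : 0 < rr.
Proof. by rewrite /rr invr_gt0; lra. Qed.

Lemma qqE : qq = rr ^+ 2 * (rr ^+ 2) ^+ m.
Proof. by rewrite -exprS -exprM. Qed.

Lemma qq_gt0 : 0 < qq.
Proof. by rewrite /qq exprn_gt0 // rr_gt0. Qed.

Lemma qq_le : qq <= 4^-1.
Proof.
rewrite qqE rr2; have h : (4^-1 : R) ^+ m <= 1 by apply: exprn_ile1; rewrite ?invr_ge0 ?invf_le1; lra.
have h4 : (0 : R) < 4^-1 by rewrite invr_gt0; lra.
nra.
Qed.

Lemma aa2 : aa ^+ 2 = rr ^+ 2 * qq.
Proof.
rewrite /aa /qq sqrrN -exprM -exprD; congr (_ ^+ _); lia.
Qed.

Lemma aa_rm : aa * rr ^+ m = - qq.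
Proof. by rewrite /aa /qq mulNr -exprD; congr (- (_ ^+ _)); lia. Qed.

Lemma aa_ge : - 4^-1 <= aa.
Proof.
rewrite /aa lerN2 exprS exprS mulrA -expr2 rr2.
have h : rr ^+ m <= 1 by apply: exprn_ile1; rewrite /rr ?invr_ge0 ?invf_le1; lra.
have h4 : (0 : R) < 4^-1 by rewrite invr_gt0; lra.
have h0 : 0 <= rr ^+ m by rewrite exprn_ge0 // ltW // rr_gt0.
nra.
Qed.

Lemma bb2 : bb ^+ 2 = (1 - rr ^+ 2) * (1 - qq).
Proof.
rewrite /bb sqr_sqrtr // rr2; have := qq_le; have h4 : (0 : R) < 4^-1 by rewrite invr_gt0; lra.
have h41 : (4^-1 : R) < 1 by rewrite invf_lt1; lra.
move=> h; apply: mulr_ge0; lra.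
Qed.

Lemma bb_ge : 3 / 4 <= bb.
Proof.
have h0 : 0 <= bb by apply: sqrtr_ge0.
have := bb2; rewrite rr2 => h; have := qq_le => hq; nra.
Qed.

Definition beta : 'cV[R]_m.+1 := \col_(i < m.+1) (bb * rr ^+ i).
Definition uu : 'cV[R]_m.+1 := (1 - qq)^-1 *: beta.

Lemma iterN x : iter m.+1 Phi x = (- qq) *: x + beta.
Proof.
apply/matrixP => i j; rewrite (ord1 j) iter_coord //.
rewrite leqNgt ltn_ord /= addnK inord_val !mxE aa_rm; ring.
Qed.

Lemma sqnorm_beta : sqnorm beta = (1 - qq) ^+ 2.
Proof.
rewrite /sqnorm.
under eq_bigr => i _ do rewrite mxE exprMn -exprM mulnC exprM.
rewrite -mulr_sumr.
have := subrX1 (rr ^+ 2) m.+1; rewrite exprS -qqE => h.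
rewrite bb2; set S := \sum_(i < m.+1) _ in h *.
have -> : (1 - rr ^+ 2) * (1 - qq) * S = (1 - qq) * ((1 - rr ^+ 2) * S) by ring.
have e : (1 - rr ^+ 2) * S = - ((rr ^+ 2 - 1) * S) by ring.
rewrite e -h opprB.
by rewrite expr2.
Qed.

Lemma q1 : 0 < 1 - qq.
Proof. have := qq_le; have : (4^-1 : R) < 1 by rewrite invf_lt1; lra. lra. Qed.

Lemma sqnorm_uu : sqnorm uu = 1.
Proof.
rewrite /uu sqnormZ sqnorm_beta exprVn mulVf //.
by rewrite expf_neq0 // gt_eqF // q1.
Qed.

Lemma beta_uu : beta = (1 - qq) *: uu.
Proof. by rewrite /uu scalerA mulfV ?scale1r // gt_eqF // q1. Qed.

Lemma coord_le (x : 'cV[R]_m.+1) i : x i 0 ^+ 2 <= sqnorm x.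
Proof.
rewrite /sqnorm (bigD1 i) //= lerDl; apply: sumr_ge0 => j _; exact: sqr_ge0.
Qed.

Lemma Phi_pos x : sqnorm x <= 1 -> sqnorm (Phi x) <= 1.
Proof.
move=> hx.
have ex : sqnorm x = \sum_(i < m) x (widen_ord (leqnSn m) i) 0 ^+ 2 + x ord_max 0 ^+ 2.
  by rewrite /sqnorm big_ord_recr.
have eP : sqnorm (Phi x) = (aa * x ord_max 0 + bb) ^+ 2
            + rr ^+ 2 * \sum_(i < m) x (widen_ord (leqnSn m) i) 0 ^+ 2.
  rewrite /sqnorm big_ord_recl Phi_coord eqxx mulr_sumr; congr (_ + _).
  apply: eq_bigr => i _; rewrite Phi_coord /= exprMn; congr (_ * (x _ 0) ^+ 2).
  apply: val_inj => /=; rewrite add0n inordK //; exact: (ltn_trans (ltn_ord i) (ltnSn m)).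
rewrite ex in hx; rewrite eP.
set s := \sum_(i < m) _ in hx *.
set t := x ord_max 0 in hx *.
have s0 : 0 <= s by apply: sumr_ge0 => i _; exact: sqr_ge0.
have ha := aa2; have hb := bb2; have hq := qq_gt0; have hq1 := q1.
have hr := rr2.
have hr4 : (0 : R) < 4^-1 by rewrite invr_gt0; lra.
have hr41 : (4^-1 : R) < 1 by rewrite invf_lt1; lra.
have key : (rr ^+ 2 - aa ^+ 2) * (1 - ((aa * t + bb) ^+ 2 + rr ^+ 2 * (1 - t ^+ 2)))
           = ((rr ^+ 2 - aa ^+ 2) * t - aa * bb) ^+ 2
             + ((rr ^+ 2 - aa ^+ 2) * (1 - rr ^+ 2) - rr ^+ 2 * bb ^+ 2) by ring.
have e0 : (rr ^+ 2 - aa ^+ 2) * (1 - rr ^+ 2) - rr ^+ 2 * bb ^+ 2 = 0.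
  by rewrite ha hb; ring.
rewrite e0 addr0 in key.
have hpos : 0 < rr ^+ 2 - aa ^+ 2 by rewrite ha hr; nra.
have : 0 <= 1 - ((aa * t + bb) ^+ 2 + rr ^+ 2 * (1 - t ^+ 2)).
  rewrite -(pmulr_rge0 _ hpos) key; exact: sqr_ge0.
nra.
Qed.

Lemma sq_ident (q : R) (y u : 'cV[R]_m.+1) : sqnorm ((-q) *: y + (1 - q) *: u)
  = q * sqnorm y - q * (1 - q) * sqnorm (y + u) + (1 - q) * sqnorm u.
Proof. rewrite !sqnormD !sqnormZ dotZl dotZr; ring. Qed.

Lemma Phi_strict x : sqnorm x <= 1 -> sqnorm (iter m.+2 Phi x) < 1.
Proof.
move=> hx; rewrite iterSr iterN beta_uu.
set y := Phi x.
have hY := Phi_pos x hx; rewrite -/y in hY.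
have e : sqnorm ((- qq) *: y + (1 - qq) *: uu)
       = qq * sqnorm y - qq * (1 - qq) * sqnorm (y + uu) + (1 - qq) * sqnorm uu.
  exact: sq_ident.
rewrite e sqnorm_uu.
have hW : 0 < sqnorm (y + uu).
  apply: lt_le_trans (coord_le _ ord0).
  rewrite mxE /y Phi_coord eqxx /uu !mxE.
  have ht : x ord_max 0 <= 1.
    have := coord_le x ord_max; move=> h; nra.
  have := aa_ge; have := bb_ge; have hq1 := q1.
  have : 0 < (1 - qq)^-1 * (bb * rr ^+ 0) by rewrite expr0 mulr1 mulr_gt0 ?invr_gt0 //; have := bb_ge; lra.
  have ha0 : aa <= 0 by rewrite /aa oppr_le0 exprn_ge0 // ltW // rr_gt0.
  have h4 : (4^-1 : R) <= 1/2 by lra.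
  have hx1 : - 1 <= x ord_max 0 by have := coord_le x ord_max; move=> h; nra.
  move=> hu hb hal; apply: exprn_gt0; nra.
have := q1; have := qq_gt0 => h1 h2.
have : 0 < qq * (1 - qq) * sqnorm (y + uu) by rewrite !mulr_gt0.
nra.
Qed.

Lemma Phi_touch : sqnorm (- uu) = 1 /\ sqnorm (iter m.+1 Phi (- uu)) = 1.
Proof.
split; first by rewrite sqnormN sqnorm_uu.
rewrite iterN beta_uu scalerN scaleNr opprK -scalerDl addrC subrK scale1r.
exact: sqnorm_uu.
Qed.

End Example2.
Section Equiv.
Variable R : realType.
Variable n : nat.

Lemma pos_equiv (f : 'cV[R]_n -> 'cV[R]_n) :
  K_positive (unit_ball R n) f <-> forall x, sqnorm x <= 1 -> sqnorm (f x) <= 1.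
Proof.
split => H.
  by move=> x hx; apply: H; exists x.
by move=> y [x hx <-]; apply: H.
Qed.

Lemma strict_equiv (g : 'cV[R]_n -> 'cV[R]_n) :
  (forall x, sqnorm x <= 1 -> sqnorm (g x) <= 1) ->
  strictly_K_positive (unit_ball R n) g <-> forall x, sqnorm x <= 1 -> sqnorm (g x) < 1.
Proof.
move=> hpos; split => H.
  move=> x hx; rewrite lt_neqAle hpos // andbT; apply/eqP => h.
  by apply: (@not_int _ _ _ h); apply: H; exists x.
by move=> y [x hx <-]; apply: in_int; apply: H.
Qed.

Lemma nonstrict (g : 'cV[R]_n -> 'cV[R]_n) :
  (forall x, sqnorm x <= 1 -> sqnorm (g x) <= 1) ->
  ~ strictly_K_positive (unit_ball R n) g ->
  exists x, sqnorm x <= 1 /\ sqnorm (g x) = 1.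
Proof.
move=> hpos hn; apply: boolp.contrapT => hno; apply: hn.
apply/(strict_equiv _ hpos) => x hx; rewrite lt_neqAle hpos // andbT.
by apply/eqP => h; apply: hno; exists x.
Qed.

Lemma upper_bound f k : is_affine f -> K_primitive (unit_ball R n) f ->
  is_gamma_aff_map (unit_ball R n) f k -> (k <= n.+1)%N.
Proof.
move=> haff [/pos_equiv hpos [k0 [hk01 hk0]]] [hk1 hks hlt].
rewrite leqNgt; apply/negP => hk.
have hposi := @pos_iter R n f hpos.
have hns := hlt n.+1 isT hk.
have [x0 [hx0 h1]] := nonstrict _ (fun x hx => hposi n.+1 x hx) hns.
have hk0' := (strict_equiv _ (fun x hx => hposi k0 x hx)).1 hk0.
exact: (@upper_contra R n f haff hpos k0 hk0' x0 hx0 h1).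
Qed.

End Equiv.

Lemma lower_bound (R : realType) (m : nat) :
  exists f, [/\ is_affine f, K_primitive (unit_ball R m.+1) f &
                is_gamma_aff_map (unit_ball R m.+1) f m.+2].
Proof.
exists (@Phi R m).
have hpos := @Phi_pos R m.
have hposi := @pos_iter R m.+1 (@Phi R m) hpos.
have hstr : strictly_K_positive (unit_ball R m.+1) (iter m.+2 (@Phi R m)).
  by apply/(@strict_equiv R m.+1 _ (fun x hx => hposi m.+2 x hx)); apply: Phi_strict.
split.
- by exists (AA R m), (cc R m).
- by split; [apply/pos_equiv | exists m.+2].
- split => // j hj1 hjm /(@strict_equiv R m.+1 _ (fun x hx => hposi j x hx)) hs.
  have [hu1 hu2] := @Phi_touch R m.
  have hy := hposi (m.+1 - j)%N (- uu R m) ltac:(by rewrite hu1).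
  have := hs _ hy; rewrite -iterD subnKC; last by rewrite -ltnS.
  by rewrite hu2 ltxx.
Qed.

Theorem theorem3 (R : realType) (n : nat) (hn : (1 <= n)%N) :
  gamma_aff (unit_ball R n) = ((n.+1)%:R : R)%:E.
Proof.
case: n hn => [//|m] _.
rewrite /gamma_aff; apply/eqP; rewrite eq_le; apply/andP; split.
  apply: ge_ereal_sup => e [k [f [haff hprim hg]] <-].
  by rewrite lee_fin ler_nat; exact: (@upper_bound R m.+1 f k haff hprim hg).
apply: ereal_sup_ubound; exists m.+2 => //.
exact: lower_bound.
Qed.
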